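(* Let $(\mathcal{C},\otimes,\mathbf{1},a,\ell,r)$ be a monoidal category. Then $\mathcal{C}_q$, with the monoidal product $*$, unit $(\emptyset,\emptyset)$, identity unit constraints and associativity constraint $a_q$, is a monoidal category which is non-strict (whenever $\mathcal{C}$ has at least one object), even if $\mathcal{C}$ is strict; and the functor $j:\mathcal{C}\to\mathcal{C}_q$, $j(X)=((X),\bullet)$, equipped with the constraints $u:(\emptyset,\emptyset)\to((\mathbf{1}),\bullet)$ and $\eta_{X,Y}:((X,Y),\bullet\bullet)\to((X\otimes Y),\bullet)$ corresponding to $\mathrm{Id}_{\mathbf{1}}$ and $\mathrm{Id}_{X\otimes Y}$, is a strong monoidal functor and an equivalence of categories. Hence every monoidal category is monoidally equivalent to a non-strict monoidal category.
   Context: $\mathrm{Mag}(\bullet)$ is the free unital magma on one generator $\bullet$ (parenthesised words in $\bullet$, including the empty word $\emptyset$); $|t|$ is the number of bullets in $t$. Non-strictification $\mathcal{C}_q$: objects are pairs $(S,t)$ with $S$ a finite sequence of objects of $\mathcal{C}$ and $t\in\mathrm{Mag}(\bullet)$ with $|t|$ equal to the length of $S$. Parenthesisation: $\mathrm{Par}(\emptyset,\emptyset)=\mathbf{1}$, $\mathrm{Par}((X),\bullet)=X$, and for $|t|>1$ write uniquely $t=t_1t_2$ with $|t_1|,|t_2|\ge1$ and $S=S_1*S_2$ with $S_k$ of length $|t_k|$, and set $\mathrm{Par}(S,t)=\mathrm{Par}(S_1,t_1)\otimes\mathrm{Par}(S_2,t_2)$. Morphisms: $\mathrm{Hom}_{\mathcal{C}_q}((S,t),(S',t')):=\mathrm{Hom}_{\mathcal{C}}(\mathrm{Par}(S,t),\mathrm{Par}(S',t'))$.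 Monoidal product: $(S,t)*(S',t'):=(S*S',tt')$ (concatenation of sequences, magma product of words), with $(\emptyset,\emptyset)$ a strict two-sided unit; for nonempty factors $\mathrm{Par}((S,t)*(S',t'))=\mathrm{Par}(S,t)\otimes\mathrm{Par}(S',t')$ and for morphisms $f,g$ one sets $f*g:=f\otimes g$ (with the evident conjugation by the unit isomorphisms $\ell,r$ of $\mathcal{C}$ when a factor is $(\emptyset,\emptyset)$). Left and right unit constraints are identities. The associativity constraint $a_q:((S,t)*(S',t'))*(S'',t'')=(S*S'*S'',(tt')t'')\to(S*S'*S'',t(t't''))$ is the morphism with $\mathrm{Par}(a_q)=a_{\mathrm{Par}(S,t),\mathrm{Par}(S',t'),\mathrm{Par}(S'',t'')}$. A monoidal category is strict if its associativity and unit constraints are identities, and non-strict otherwise. *)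

(* Defs.v *)
Record CatData : Type := {
  ob   : Type;
  hom  : ob -> ob -> Type;
  idm  : forall x, hom x x;
  comp : forall x y z, hom y z -> hom x y -> hom x z   (* comp g f = g o f *)
}.

Arguments idm {C} x : rename.
Arguments comp {C x y z} g f : rename.

Definition cat_laws (C : CatData) : Prop :=
  (forall x y (f : hom C x y), comp (idm y) f = f) /\
  (forall x y (f : hom C x y), comp f (idm x) = f) /\
  (forall x y z w (f : hom C x y) (g : hom C y z) (h : hom C z w),
      comp h (comp g f) = comp (comp h g) f).

Definition is_iso {C : CatData} {x y : ob C} (f : hom C x y) : Prop :=
  exists g : hom C y x, comp g f = idm x /\ comp f g = idm y.

Record MonData : Type := {
  mcat    : CatData;
  tens    : ob mcat -> ob mcat -> ob mcat;
  tensm   : forall x x' y y', hom mcat x x' -> hom mcat y y' ->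
              hom mcat (tens x y) (tens x' y');
  munit   : ob mcat;
  massoc  : forall x y z, hom mcat (tens (tens x y) z) (tens x (tens y z));
  massocI : forall x y z, hom mcat (tens x (tens y z)) (tens (tens x y) z);
  mlu     : forall x, hom mcat (tens munit x) x;
  mluI    : forall x, hom mcat x (tens munit x);
  mru     : forall x, hom mcat (tens x munit) x;
  mruI    : forall x, hom mcat x (tens x munit)
}.

Arguments tens {M} x y : rename.
Arguments tensm {M x x' y y'} f g : rename.
Arguments munit {M} : rename.
Arguments massoc {M} x y z : rename.
Arguments massocI {M} x y z : rename.
Arguments mlu {M} x : rename.
Arguments mluI {M} x : rename.
Arguments mru {M} x : rename.
Arguments mruI {M} x : rename.

Definition mon_laws (M : MonData) : Prop :=
  cat_laws (mcat M) /\
  (forall x y : ob (mcat M), tensm (idm x) (idm y) = idm (tens x y)) /\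
  (forall x1 x2 x3 y1 y2 y3 (f : hom (mcat M) x1 x2) (f' : hom (mcat M) x2 x3)
          (g : hom (mcat M) y1 y2) (g' : hom (mcat M) y2 y3),
      tensm (comp f' f) (comp g' g) = comp (tensm f' g') (tensm f g)) /\
  (forall x y z : ob (mcat M), comp (massocI x y z) (massoc x y z) = idm _ /\
                 comp (massoc x y z) (massocI x y z) = idm _) /\
  (forall x : ob (mcat M), comp (mluI x) (mlu x) = idm _ /\ comp (mlu x) (mluI x) = idm _) /\
  (forall x : ob (mcat M), comp (mruI x) (mru x) = idm _ /\ comp (mru x) (mruI x) = idm _) /\
  (forall x x' y y' z z' (f : hom (mcat M) x x') (g : hom (mcat M) y y')
          (h : hom (mcat M) z z'),
      comp (massoc x' y' z') (tensm (tensm f g) h)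
      = comp (tensm f (tensm g h)) (massoc x y z)) /\
  (forall x x' (f : hom (mcat M) x x'),
      comp (mlu x') (tensm (idm munit) f) = comp f (mlu x)) /\
  (forall x x' (f : hom (mcat M) x x'),
      comp (mru x') (tensm f (idm munit)) = comp f (mru x)) /\
  (forall w x y z : ob (mcat M),
      comp (massoc w x (tens y z)) (massoc (tens w x) y z)
      = comp (tensm (idm w) (massoc x y z))
             (comp (massoc w (tens x y) z) (tensm (massoc w x y) (idm z)))) /\
  (forall x y : ob (mcat M),
      comp (tensm (idm x) (mlu y)) (massoc x munit y) = tensm (mru x) (idm y)).

Definition strict (M : MonData) : Prop :=
  (forall x y z : ob (mcat M), exists e : tens (tens x y) z = tens x (tens y z),
      massoc x y z = eq_rect _ (fun w => hom (mcat M) (tens (tens x y) z) w)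
                             (idm _) _ e) /\
  (forall x : ob (mcat M), exists e : tens munit x = x,
      mlu x = eq_rect _ (fun w => hom (mcat M) (tens munit x) w) (idm _) _ e) /\
  (forall x : ob (mcat M), exists e : tens x munit = x,
      mru x = eq_rect _ (fun w => hom (mcat M) (tens x munit) w) (idm _) _ e).

Definition non_strict (M : MonData) : Prop := ~ strict M.

Record FunData (C D : CatData) : Type := {
  fob  : ob C -> ob D;
  fhom : forall x y, hom C x y -> hom D (fob x) (fob y)
}.

Arguments fob {C D} F x : rename.
Arguments fhom {C D} F {x y} f : rename.

Definition functor_laws {C D : CatData} (F : FunData C D) : Prop :=
  (forall x, fhom F (idm x) = idm (fob F x)) /\
  (forall x y z (f : hom C x y) (g : hom C y z),
      fhom F (comp g f) = comp (fhom F g) (fhom F f)).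

Definition fun_id (C : CatData) : FunData C C :=
  {| fob := fun x => x; fhom := fun x y f => f |}.

Definition fun_comp {C D E : CatData} (G : FunData D E) (F : FunData C D)
  : FunData C E :=
  {| fob := fun x => fob G (fob F x);
     fhom := fun x y f => fhom G (fhom F f) |}.

Definition nat_iso {C D : CatData} (F G : FunData C D) : Prop :=
  exists alpha : forall x, hom D (fob F x) (fob G x),
    (forall x, is_iso (alpha x)) /\
    (forall x y (f : hom C x y),
        comp (alpha y) (fhom F f) = comp (fhom G f) (alpha x)).

Definition equivalence {C D : CatData} (F : FunData C D) : Prop :=
  functor_laws F /\
  exists G : FunData D C, functor_laws G /\
    nat_iso (fun_comp G F) (fun_id C) /\ nat_iso (fun_comp F G) (fun_id D).

Definition strong_monoidal (M N : MonData) (F : FunData (mcat M) (mcat N))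
  (u : hom (mcat N) munit (fob F munit))
  (eta : forall x y, hom (mcat N) (tens (fob F x) (fob F y)) (fob F (tens x y)))
  : Prop :=
  functor_laws F /\
  is_iso u /\
  (forall x y : ob (mcat M), is_iso (eta x y)) /\
  (forall x x' y y' (f : hom (mcat M) x x') (g : hom (mcat M) y y'),
      comp (fhom F (tensm f g)) (eta x y) = comp (eta x' y') (tensm (fhom F f) (fhom F g))) /\
  (forall x y z : ob (mcat M),
      comp (fhom F (massoc x y z)) (comp (eta (tens x y) z) (tensm (eta x y) (idm _)))
      = comp (eta x (tens y z)) (comp (tensm (idm _) (eta y z))
                                      (massoc (fob F x) (fob F y) (fob F z)))) /\
  (forall x : ob (mcat M),
      comp (fhom F (mlu x)) (comp (eta munit x) (tensm u (idm _))) = mlu (fob F x)) /\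
  (forall x : ob (mcat M),
      comp (fhom F (mru x)) (comp (eta x munit) (tensm (idm _) u)) = mru (fob F x)).

(* An object (S,t) with S a sequence of objects and t ∈ Mag(•), |t| = |S|,
   is encoded as the parenthesised word t with its leaves labelled by the
   entries of S in order: None = (∅,∅), Some w with w a nonempty binary tree
   with leaves labelled by objects.  [qseq] and [qshape] recover (S,t). *)

Inductive ltree (A : Type) : Type :=
| Leaf : A -> ltree A
| Node : ltree A -> ltree A -> ltree A.
Arguments Leaf {A} a.
Arguments Node {A} l r.

(* shape in Mag(•): None = empty word, Some tree = nonempty parenthesised word *)
Inductive btree : Type := bullet | bnode : btree -> btree -> btree.

Fixpoint lt_seq {A} (w : ltree A) : list A :=
  match w with Leaf a => a :: nil | Node l r => lt_seq l ++ lt_seq r end.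
Fixpoint lt_shape {A} (w : ltree A) : btree :=
  match w with Leaf _ => bullet | Node l r => bnode (lt_shape l) (lt_shape r) end.
Definition qseq {A} (x : option (ltree A)) : list A :=
  match x with None => nil | Some w => lt_seq w end.
Definition qshape {A} (x : option (ltree A)) : option btree :=
  match x with None => None | Some w => Some (lt_shape w) end.

Section Cq.
Variable M : MonData.
Let C := mcat M.

Definition qob : Type := option (ltree (ob C)).

Fixpoint parT (w : ltree (ob C)) : ob C :=
  match w with Leaf X => X | Node l r => tens (parT l) (parT r) end.

Definition Par (x : qob) : ob C :=
  match x with None => munit | Some w => parT w end.

(* monoidal product on objects: concatenation / magma product *)
Definition qprod (x y : qob) : qob :=
  match x with
  | None => y
  | Some a => match y with None => Some a | Some b => Some (Node a b) end
  end.

Definition qcat : CatData :=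
  {| ob := qob;
     hom := fun x y => hom C (Par x) (Par y);
     idm := fun x => idm (Par x);
     comp := fun x y z g f => comp g f |}.

Definition phi (x y : qob) : hom C (tens (Par x) (Par y)) (Par (qprod x y)) :=
  match x as x0 return hom C (tens (Par x0) (Par y)) (Par (qprod x0 y)) with
  | None => mlu (Par y)
  | Some a =>
      match y as y0 return hom C (tens (parT a) (Par y0)) (Par (qprod (Some a) y0)) with
      | None => mru (parT a)
      | Some b => idm _
      end
  end.

Definition phiI (x y : qob) : hom C (Par (qprod x y)) (tens (Par x) (Par y)) :=
  match x as x0 return hom C (Par (qprod x0 y)) (tens (Par x0) (Par y)) with
  | None => mluI (Par y)
  | Some a =>
      match y as y0 return hom C (Par (qprod (Some a) y0)) (tens (parT a) (Par y0)) with
      | None => mruI (parT a)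
      | Some b => idm _
      end
  end.

Definition qtensm (x x' y y' : qob) :
  hom C (Par x) (Par x') -> hom C (Par y) (Par y') ->
  hom C (Par (qprod x y)) (Par (qprod x' y')) :=
  match x as x0, x' as x1, y as y0, y' as y1
  return hom C (Par x0) (Par x1) -> hom C (Par y0) (Par y1) ->
         hom C (Par (qprod x0 y0)) (Par (qprod x1 y1)) with
  | Some a, Some a', Some b, Some b' => fun f g => tensm f g
  | x0, x1, y0, y1 => fun f g => comp (phi x1 y1) (comp (tensm f g) (phiI x0 y0))
  end.

(* associativity constraint a_q: a_{Par x, Par y, Par z} for nonempty
   factors; for an empty factor both sides coincide and a_q is the identity *)
Definition qassoc (x y z : qob) :
  hom C (Par (qprod (qprod x y) z)) (Par (qprod x (qprod y z))) :=
  match x as x0, y as y0, z as z0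
  return hom C (Par (qprod (qprod x0 y0) z0)) (Par (qprod x0 (qprod y0 z0))) with
  | Some a, Some b, Some c => massoc (parT a) (parT b) (parT c)
  | None, _, _ => idm _
  | Some a, None, _ => idm _
  | Some a, Some b, None => idm _
  end.

Definition qassocI (x y z : qob) :
  hom C (Par (qprod x (qprod y z))) (Par (qprod (qprod x y) z)) :=
  match x as x0, y as y0, z as z0
  return hom C (Par (qprod x0 (qprod y0 z0))) (Par (qprod (qprod x0 y0) z0)) with
  | Some a, Some b, Some c => massocI (parT a) (parT b) (parT c)
  | None, _, _ => idm _
  | Some a, None, _ => idm _
  | Some a, Some b, None => idm _
  end.

Definition qlu (x : qob) : hom C (Par (qprod None x)) (Par x) := idm (Par x).
Definition qru (x : qob) : hom C (Par (qprod x None)) (Par x) :=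
  match x as x0 return hom C (Par (qprod x0 None)) (Par x0) with
  | None => idm _ | Some a => idm _ end.

Definition Cq : MonData :=
  {| mcat := qcat;
     tens := qprod;
     tensm := qtensm;
     munit := None;
     massoc := qassoc;
     massocI := qassocI;
     mlu := qlu;
     mluI := qlu;
     mru := qru;
     mruI := fun x => match x as x0 return hom C (Par x0) (Par (qprod x0 None)) with
                      | None => idm _ | Some a => idm _ end |}.

Definition j_fun : FunData (mcat M) (mcat Cq) :=
  {| fob := fun X => Some (Leaf X) : ob (mcat Cq);
     fhom := fun X Y (f : hom C X Y) => f |}.

Definition j_u : hom (mcat Cq) (@munit Cq) (fob j_fun munit) := idm (@munit M).

Definition j_eta (X Y : ob C) :
  hom (mcat Cq) (@tens Cq (fob j_fun X) (fob j_fun Y)) (fob j_fun (tens X Y)) :=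
  idm (tens X Y).

End Cq.

(* Main.v *)
Require Import Defs.

Section L.
Context {M : MonData}.
End L.

Lemma idl {M} (HM : mon_laws M) : forall x y (f : hom (mcat M) x y), comp (idm y) f = f.
Proof. apply HM. Qed.
Lemma idr {M} (HM : mon_laws M) : forall x y (f : hom (mcat M) x y), comp f (idm x) = f.
Proof. apply HM. Qed.
Lemma assoc {M} (HM : mon_laws M) : forall x y z w (f : hom (mcat M) x y) (g : hom (mcat M) y z) (h : hom (mcat M) z w),
      comp h (comp g f) = comp (comp h g) f.
Proof. apply HM. Qed.
Lemma tid {M} (HM : mon_laws M) : forall x y : ob (mcat M), tensm (idm x) (idm y) = idm (tens x y).
Proof. apply HM. Qed.
Lemma tcomp {M} (HM : mon_laws M) : forall x1 x2 x3 y1 y2 y3 (f : hom (mcat M) x1 x2) (f' : hom (mcat M) x2 x3)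
          (g : hom (mcat M) y1 y2) (g' : hom (mcat M) y2 y3),
      tensm (comp f' f) (comp g' g) = comp (tensm f' g') (tensm f g).
Proof. apply HM. Qed.
Lemma aIa {M} (HM : mon_laws M) : forall x y z : ob (mcat M), comp (massocI x y z) (massoc x y z) = idm _.
Proof. apply HM. Qed.
Lemma aaI {M} (HM : mon_laws M) : forall x y z : ob (mcat M), comp (massoc x y z) (massocI x y z) = idm _.
Proof. apply HM. Qed.
Lemma luIlu {M} (HM : mon_laws M) : forall x : ob (mcat M), comp (mluI x) (mlu x) = idm _.
Proof. apply HM. Qed.
Lemma luluI {M} (HM : mon_laws M) : forall x : ob (mcat M), comp (mlu x) (mluI x) = idm _.
Proof. apply HM. Qed.
Lemma ruIru {M} (HM : mon_laws M) : forall x : ob (mcat M), comp (mruI x) (mru x) = idm _.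
Proof. apply HM. Qed.
Lemma ruruI {M} (HM : mon_laws M) : forall x : ob (mcat M), comp (mru x) (mruI x) = idm _.
Proof. apply HM. Qed.
Lemma a_nat {M} (HM : mon_laws M) : forall x x' y y' z z' (f : hom (mcat M) x x') (g : hom (mcat M) y y')
          (h : hom (mcat M) z z'),
      comp (massoc x' y' z') (tensm (tensm f g) h)
      = comp (tensm f (tensm g h)) (massoc x y z).
Proof. apply HM. Qed.
Lemma lu_nat {M} (HM : mon_laws M) : forall x x' (f : hom (mcat M) x x'),
      comp (mlu x') (tensm (idm munit) f) = comp f (mlu x).
Proof. apply HM. Qed.
Lemma ru_nat {M} (HM : mon_laws M) : forall x x' (f : hom (mcat M) x x'),
      comp (mru x') (tensm f (idm munit)) = comp f (mru x).
Proof. apply HM. Qed.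
Lemma pent {M} (HM : mon_laws M) : forall w x y z : ob (mcat M),
      comp (massoc w x (tens y z)) (massoc (tens w x) y z)
      = comp (tensm (idm w) (massoc x y z))
             (comp (massoc w (tens x y) z) (tensm (massoc w x y) (idm z))).
Proof. apply HM. Qed.
Lemma tri {M} (HM : mon_laws M) : forall x y : ob (mcat M),
      comp (tensm (idm x) (mlu y)) (massoc x munit y) = tensm (mru x) (idm y).
Proof. apply HM. Qed.

Ltac nrm HM := repeat rewrite <- (assoc HM).

Lemma tcomp_l {M} (HM : mon_laws M) x1 x2 x3 y (f : hom (mcat M) x1 x2) (f' : hom (mcat M) x2 x3) :
  tensm (comp f' f) (idm y) = comp (tensm f' (idm y)) (tensm f (idm y)).
Proof. rewrite <- (tcomp HM). rewrite (idl HM). reflexivity. Qed.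
Lemma tcomp_r {M} (HM : mon_laws M) x1 x2 x3 y (f : hom (mcat M) x1 x2) (f' : hom (mcat M) x2 x3) :
  tensm (idm y) (comp f' f) = comp (tensm (idm y) f') (tensm (idm y) f).
Proof. rewrite <- (tcomp HM). rewrite (idl HM). reflexivity. Qed.

Lemma lu_cancel {M} (HM : mon_laws M) x y (f g : hom (mcat M) x y) :
  tensm (idm munit) f = tensm (idm munit) g -> f = g.
Proof.
  intro E.
  assert (Hf : f = comp (mlu y) (comp (tensm (idm munit) f) (mluI x))).
  { rewrite (assoc HM), (lu_nat HM). nrm HM. rewrite (luluI HM), (idr HM). reflexivity. }
  assert (Hg : g = comp (mlu y) (comp (tensm (idm munit) g) (mluI x))).
  { rewrite (assoc HM), (lu_nat HM). nrm HM. rewrite (luluI HM), (idr HM). reflexivity. }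
  rewrite Hf, Hg, E. reflexivity.
Qed.
Lemma ru_cancel {M} (HM : mon_laws M) x y (f g : hom (mcat M) x y) :
  tensm f (idm munit) = tensm g (idm munit) -> f = g.
Proof.
  intro E.
  assert (Hf : f = comp (mru y) (comp (tensm f (idm munit)) (mruI x))).
  { rewrite (assoc HM), (ru_nat HM). nrm HM. rewrite (ruruI HM), (idr HM). reflexivity. }
  assert (Hg : g = comp (mru y) (comp (tensm g (idm munit)) (mruI x))).
  { rewrite (assoc HM), (ru_nat HM). nrm HM. rewrite (ruruI HM), (idr HM). reflexivity. }
  rewrite Hf, Hg, E. reflexivity.
Qed.
Arguments assoc {M} HM {x y z w} f g h.
Arguments idl {M} HM {x y} f.
Arguments idr {M} HM {x y} f.
Arguments a_nat {M} HM {x x' y y' z z'} f g h.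
Arguments lu_nat {M} HM {x x'} f.
Arguments ru_nat {M} HM {x x'} f.

Lemma K1 {M} (HM : mon_laws M) (x y : ob (mcat M)) :
  comp (mlu (tens x y)) (massoc munit x y) = tensm (mlu x) (idm y).
Proof.
  apply (lu_cancel HM).
  set (P := comp (massoc munit (tens munit x) y) (tensm (massoc munit munit x) (idm y))).
  set (PI := comp (tensm (massocI munit munit x) (idm y)) (massocI munit (tens munit x) y)).
  assert (HP : comp P PI = idm _).
  { unfold P, PI. nrm HM. rewrite (assoc HM _ (tensm (massocI _ _ _) _) (tensm (massoc _ _ _) _)).
    rewrite <- (tcomp_l HM), (aaI HM), (tid HM), (idl HM), (aaI HM). reflexivity. }
  assert (E : comp (tensm (idm munit) (comp (mlu (tens x y)) (massoc munit x y))) P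
             = comp (tensm (idm munit) (tensm (mlu x) (idm y))) P).
  { unfold P. rewrite (tcomp_r HM). nrm HM.
    rewrite <- (pent HM). rewrite (assoc HM), (tri HM).
    rewrite <- (tid HM x y), <- (a_nat HM).
    rewrite <- (tri HM munit x), (tcomp_l HM).
    rewrite (assoc HM), (a_nat HM). nrm HM. reflexivity. }
  rewrite <- (idr HM (tensm (idm munit) (comp _ _))), <- HP, (assoc HM), E.
  nrm HM. rewrite HP, (idr HM). reflexivity.
Qed.

Lemma K2 {M} (HM : mon_laws M) (x y : ob (mcat M)) :
  comp (tensm (idm x) (mru y)) (massoc x y munit) = mru (tens x y).
Proof.
  apply (ru_cancel HM).
  assert (E : comp (massoc x y munit) (tensm (mru (tens x y)) (idm munit))
     = comp (massoc x y munit) (tensm (comp (tensm (idm x) (mru y)) (massoc x y munit)) (idm munit))).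
  { rewrite <- (tri HM (tens x y) munit).
    rewrite <- (tid HM x y).
    rewrite (assoc HM), (a_nat HM). nrm HM. rewrite (pent HM).
    rewrite (assoc HM _ (tensm (idm x) (massoc y munit munit))).
    rewrite <- (tcomp_r HM), (tri HM).
    rewrite (assoc HM), <- (a_nat HM). nrm HM. rewrite <- (tcomp_l HM). reflexivity. }
  rewrite <- (idl HM (tensm (mru (tens x y)) _)), <- (aIa HM x y munit).
  rewrite <- (assoc HM), E. rewrite (assoc HM), (aIa HM), (idl HM). reflexivity.
Qed.

Lemma lu_tens {M} (HM : mon_laws M) (x : ob (mcat M)) :
  mlu (tens munit x) = tensm (idm munit) (mlu x).
Proof.
  assert (E := lu_nat HM (mlu x)).
  rewrite <- (idl HM (tensm _ _)), <- (luIlu HM x), <- (assoc HM), E.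
  rewrite (assoc HM), (luIlu HM), (idl HM). reflexivity.
Qed.

Lemma K3 {M} (HM : mon_laws M) : mlu (@munit M) = mru munit.
Proof.
  apply (ru_cancel HM).
  rewrite <- (tri HM), <- (K1 HM), (lu_tens HM). reflexivity.
Qed.

Ltac simp HM := repeat first [rewrite (tid HM) | rewrite (idl HM) | rewrite (idr HM)].

Lemma phi_phiI {M} (HM : mon_laws M) x y : comp (phi M x y) (phiI M x y) = idm _.
Proof. destruct x as [a|], y as [b|]; simpl; first [apply (luluI HM)|apply (ruruI HM)|apply (idl HM)]. Qed.
Lemma phiI_phi {M} (HM : mon_laws M) x y : comp (phiI M x y) (phi M x y) = idm _.
Proof. destruct x as [a|], y as [b|]; simpl; first [apply (luIlu HM)|apply (ruIru HM)|apply (idl HM)]. Qed.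

Lemma qtensm_eq {M} (HM : mon_laws M) x x' y y' (f : hom (mcat M) (Par M x) (Par M x'))
  (g : hom (mcat M) (Par M y) (Par M y')) :
  qtensm M x x' y y' f g = comp (phi M x' y') (comp (tensm f g) (phiI M x y)).
Proof.
  destruct x as [a|], x' as [a'|], y as [b|], y' as [b'|]; simpl; try reflexivity.
  rewrite (idl HM), (idr HM). reflexivity.
Qed.

Definition qA M x y z : hom (mcat M) (Par M (qprod M (qprod M x y) z)) (Par M (qprod M x (qprod M y z))) :=
 comp (phi M x (qprod M y z)) (comp (tensm (idm (Par M x)) (phi M y z))
   (comp (massoc (Par M x) (Par M y) (Par M z))
     (comp (tensm (phiI M x y) (idm (Par M z))) (phiI M (qprod M x y) z)))).

Lemma qassoc_eq {M} (HM : mon_laws M) x y z : qassoc M x y z = qA M x y z.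
Proof.
  unfold qA. destruct x as [a|], y as [b|].
  - destruct z as [c|]; simpl.
    + simp HM. reflexivity.
    + simp HM. rewrite (assoc HM), (K2 HM), (ruruI HM). reflexivity.
  - simpl. rewrite (assoc HM _ _ (tensm (idm _) _)), (tri HM), (assoc HM _ (tensm _ _) (tensm _ _)).
    rewrite <- (tcomp_l HM), (ruruI HM), (tid HM), (idl HM). exact (eq_sym (phi_phiI HM (Some a) z)).
  - simpl. rewrite (assoc HM _ _ (mlu _)), (lu_nat HM). nrm HM.
    rewrite (assoc HM _ _ (mlu _)), (K1 HM), (assoc HM _ (tensm _ _) (tensm _ _)).
    rewrite <- (tcomp_l HM), (luluI HM), (tid HM), (idl HM). exact (eq_sym (phi_phiI HM (Some b) z)).
  - simpl. rewrite (assoc HM _ _ (mlu _)), (lu_nat HM). nrm HM. 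
    rewrite (assoc HM _ (massoc _ _ _) (mlu _)), (K1 HM), (assoc HM _ (tensm _ _) (tensm _ _)).
    rewrite <- (tcomp_l HM), (luluI HM), (tid HM), (idl HM), (luluI HM). reflexivity.
Qed.

Lemma cancel_in {M} (HM : mon_laws M) {a b : ob (mcat M)} (f : hom (mcat M) a b) (g : hom (mcat M) b a)
  (e : comp g f = idm a) : forall d (k : hom (mcat M) d a), comp g (comp f k) = k.
Proof. intros. rewrite (assoc HM), e, (idl HM). reflexivity. Qed.

Lemma tmerge {M} (HM : mon_laws M) {x1 x2 x3 y1 y2 y3 w} (f : hom (mcat M) x1 x2) (f' : hom (mcat M) x2 x3)
          (g : hom (mcat M) y1 y2) (g' : hom (mcat M) y2 y3) (k : hom (mcat M) w (tens x1 y1)) :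
  comp (tensm f' g') (comp (tensm f g) k) = comp (tensm (comp f' f) (comp g' g)) k.
Proof. rewrite (tcomp HM), (assoc HM). reflexivity. Qed.

Lemma tsplit {M} (HM : mon_laws M) {x1 x2 x3 y1 y2} (f : hom (mcat M) x1 x2) (f' : hom (mcat M) x2 x3)
          (h : hom (mcat M) y1 y2) :
  tensm (comp f' f) h = comp (tensm f' h) (tensm f (idm y1)).
Proof. rewrite <- (tcomp HM), (idr HM). reflexivity. Qed.

Lemma qa_nat {M} (HM : mon_laws M) x x' y y' z z' (f : hom (mcat M) (Par M x) (Par M x'))
  (g : hom (mcat M) (Par M y) (Par M y')) (h : hom (mcat M) (Par M z) (Par M z')) :
  comp (qassoc M x' y' z') (qtensm M _ _ _ _ (qtensm M _ _ _ _ f g) h)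
  = comp (qtensm M _ _ _ _ f (qtensm M _ _ _ _ g h)) (qassoc M x y z).
Proof.
  rewrite !(qassoc_eq HM), !(qtensm_eq HM). unfold qA. nrm HM.
  rewrite (cancel_in HM _ _ (phiI_phi HM _ _)).
  rewrite (cancel_in HM _ _ (phiI_phi HM _ _)).
  rewrite (tmerge HM). rewrite (cancel_in HM _ _ (phiI_phi HM _ _)), (idl HM).
  rewrite (tsplit HM). nrm HM. rewrite (assoc HM _ (tensm (tensm _ _) _) (massoc _ _ _)), (a_nat HM). nrm HM.
  rewrite !(tmerge HM), (idl HM), (idr HM). nrm HM. rewrite (phiI_phi HM), (idr HM).
  reflexivity.
Qed.

Lemma mluI1 {M} (HM : mon_laws M) : mluI (@munit M) = mruI munit.
Proof.
  rewrite <- (idr HM (mluI _)), <- (ruruI HM), (assoc HM), <- (K3 HM), (luIlu HM), (idl HM). reflexivity.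
Qed.

Lemma Cq_laws {M} (HM : mon_laws M) : mon_laws (Cq M).
Proof.
  split; [|split; [|split; [|split; [|split; [|split; [|split; [|split; [|split; [|split]]]]]]]]].
  - split; [|split]; simpl; intros; [apply (idl HM)|apply (idr HM)|apply (assoc HM)].
  - simpl; intros. rewrite (qtensm_eq HM), (tid HM), (idl HM). apply (phi_phiI HM).
  - simpl; intros. rewrite !(qtensm_eq HM), (tcomp HM). nrm HM.
    rewrite (cancel_in HM _ _ (phiI_phi HM _ _)). reflexivity.
  - simpl; intros x y z. destruct x as [a|], y as [b|], z as [c|]; simpl; split;
      first [apply (aIa HM) | apply (aaI HM) | apply (idl HM)].
  - simpl; intros; split; apply (idl HM).
  - simpl; intros x; destruct x; simpl; split; apply (idl HM).
  - simpl; intros. apply (qa_nat HM).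
  - intros x x' f. cbn [mcat Cq qcat comp idm tensm munit mlu mru massoc hom ob] in *. unfold qlu. rewrite (qtensm_eq HM), (idl HM), (idr HM). simpl.
    rewrite (assoc HM), (lu_nat HM). nrm HM. rewrite (luluI HM), (idr HM). reflexivity.
  - intros x x' f. cbn [mcat Cq qcat comp idm tensm munit mlu mru massoc hom ob] in *. rewrite (qtensm_eq HM).
    destruct x as [a|], x' as [a'|]; simpl in *; simp HM.
    all: rewrite ?(mluI1 HM), ?(K3 HM), (assoc HM), (ru_nat HM); nrm HM; rewrite (ruruI HM), (idr HM); reflexivity.
  - simpl; intros w x y z.
    destruct w as [a|], x as [b|], y as [c|], z as [d|]; cbn [mcat Cq qcat comp idm tensm munit mlu mru massoc hom ob tens] in *; rewrite ?(qtensm_eq HM); simpl; simp HM. all: try (apply (pent HM)).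
    all: try reflexivity; rewrite ?(luluI HM), ?(ruruI HM); simp HM; try reflexivity.
    all: rewrite (assoc HM), ?(ru_nat HM), ?(lu_nat HM); nrm HM; rewrite ?(luluI HM), ?(ruruI HM), (idr HM); reflexivity.
  - intros x y. cbn [mcat Cq qcat comp idm tensm munit mlu mru massoc hom ob tens] in *.
    destruct x as [a|], y as [b|]; simpl; rewrite ?(qtensm_eq HM); simpl; simp HM; reflexivity.
Qed.

Theorem mainTheorem6 (M : MonData) (HM : mon_laws M) :
  mon_laws (Cq M) /\
  (ob (mcat M) -> non_strict (Cq M)) /\
  strong_monoidal M (Cq M) (j_fun M) (j_u M) (j_eta M) /\
  equivalence (j_fun M).
Proof.
  split; [apply (Cq_laws HM)|split; [|split]].
  - intros X [Ha _].
    destruct (Ha (Some (Leaf X)) (Some (Leaf X)) (Some (Leaf X))) as [e _].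
    simpl in e. inversion e.
  - unfold strong_monoidal, j_eta, j_u. split; [split; reflexivity|].
    split; [exists (idm (@munit M)); simpl; split; apply (idl HM)|].
    split; [intros x y; exists (idm (tens x y)); simpl; split; apply (idl HM)|].
    split; [intros; simpl; rewrite (idl HM), (idr HM); reflexivity|].
    split; [intros; simpl; simp HM; reflexivity|].
    split; intros; simpl; simp HM; rewrite ?(luluI HM), ?(ruruI HM); reflexivity.
  - split; [split; reflexivity|].
    exists (Build_FunData (mcat (Cq M)) (mcat M) (Par M) (fun x y f => f)).
    split; [split; reflexivity|split].
    + exists (fun x => idm x). split.
      * intros x; exists (idm x); simpl; split; apply (idl HM).
      * intros; simpl. rewrite (idl HM), (idr HM). reflexivity.
    + exists (fun x => idm (Par M x) : hom (mcat (Cq M)) _ _). split.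
      * intros x; exists (idm (Par M x)); simpl; split; apply (idl HM).
      * intros; simpl. rewrite (idl HM), (idr HM). reflexivity.
Qed.
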